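(* Assume $E\setminus T\ne\emptyset$. For $e\in E\setminus T$ let $\hat c_e=c_e/\|c_e\|_R$. Then for every circulation $g\in\mathbb{R}^E$ (i.e. $B^Tg=0$), \[ \sum_{e\in E\setminus T}p_e\big(g^TR\hat c_e\big)^2\ge\frac{\|g\|_R^2}{\tau}. \]
   Context: Let $G=(V,E,w)$ be a connected undirected graph with resistances $r_e=1/w_e>0$ and fixed edge orientations $(a,b)$. The incidence matrix $B\in\mathbb{R}^{E\times V}$ has $B_{(a,b),c}=1$ if $c=a$, $-1$ if $c=b$, $0$ otherwise; $R=\mathrm{diag}(r_e)_{e\in E}$ and $\|x\|_R=\sqrt{x^TRx}$. Let $T\subseteq E$ be a spanning tree. For vertices $a,b$, $\pi_{(a,b)}\in\mathbb{R}^E$ is the unit flow from $a$ to $b$ along the unique $a$–$b$ path in $T$. For $e=(a,b)\in E\setminus T$, $c_e=\mathbf{1}_e-\pi_{(a,b)}$ and $R_e=c_e^TRc_e$. The tree condition number is $\tau=\sum_{e\in E\setminus T}R_e/r_e$ and $p_e=\frac{R_e}{r_e\tau}$ for $e\in E\setminus T$. *)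

(* Defs.v *)
From HB Require Import structures.
From mathcomp Require Import all_boot all_order all_algebra.
Set Implicit Arguments. Unset Strict Implicit. Unset Printing Implicit Defensive.
Import Order.TTheory GRing.Theory Num.Theory.
Local Open Scope ring_scope.

Section Graph.
Variables (V E : finType) (src dst : E -> V).

Definition adj (S : {set E}) : rel V :=
  [rel u v | [exists e in S, ((src e == u) && (dst e == v))
                          || ((src e == v) && (dst e == u))]].

Definition connected_sub (S : {set E}) : Prop :=
  forall u v : V, connect (adj S) u v.

(* spanning tree: a connected spanning subgraph which is minimal, i.e.
   deleting any of its edges disconnects the endpoints of that edge
   (equivalently, connected and acyclic) *)
Definition spanning_tree (T : {set E}) : Prop :=
  connected_sub T /\
  forall e, e \in T -> ~~ connect (adj (T :\ e)) (src e) (dst e).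

(* a step of a walk: edge e traversed forward (d = true) or backward *)
Definition stail (s : E * bool) : V := if s.2 then src s.1 else dst s.1.
Definition shead (s : E * bool) : V := if s.2 then dst s.1 else src s.1.

Fixpoint walk (a b : V) (w : seq (E * bool)) : bool :=
  match w with
  | [::] => a == b
  | s :: w' => (stail s == a) && walk (shead s) b w'
  end.

Definition path_verts (a : V) (w : seq (E * bool)) : seq V := a :: map shead w.

Definition simple_path (S : {set E}) (a b : V) (w : seq (E * bool)) : bool :=
  [&& walk a b w, all (fun s => s.1 \in S) w & uniq (path_verts a w)].

Variable R : rcfType.

Definition walk_flow (w : seq (E * bool)) : E -> R :=
  fun f => \sum_(s <- w) (if s.2 then 1 else -1) * (s.1 == f)%:R.

Definition tree_path_flow (T : {set E}) (a b : V) (pi : E -> R) : Prop :=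
  exists w, simple_path T a b w /\ pi = walk_flow w.

Definition incidence (f : E) (v : V) : R :=
  (v == src f)%:R - (v == dst f)%:R.

Definition circulation (g : E -> R) : Prop :=
  forall v : V, \sum_f incidence f v * g f = 0.

Variable r : E -> R.

Definition dotR (x y : E -> R) : R := \sum_f x f * r f * y f.

Variable pi : V -> V -> E -> R.

Definition cvec (e : E) : E -> R :=
  fun f => (f == e)%:R - pi (src e) (dst e) f.

Definition Reff (e : E) : R := dotR (cvec e) (cvec e).

Variable T : {set E}.

Definition tau : R := \sum_(e | e \notin T) Reff e / r e.

Definition prob (e : E) : R := Reff e / (r e * tau).

Definition chat (e : E) : E -> R := fun f => cvec e f / Num.sqrt (dotR (cvec e) (cvec e)).

End Graph.

(* Main.v *)
Require Import Defs.
From HB Require Import structures.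
From mathcomp Require Import all_boot all_order all_algebra.
From mathcomp Require Import ring lra.
Import Order.TTheory GRing.Theory Num.Theory.
Local Open Scope ring_scope.

Section Help.
Variables (R : rcfType) (V E : finType) (src dst : E -> V).

Lemma sum_delta (F : E -> R) a : \sum_f F f * (a == f)%:R = F a.
Proof.
rewrite (bigD1 a) //= eqxx mulr1 big1 ?addr0 // => f /negbTE.
by rewrite eq_sym => ->; rewrite mulr0.
Qed.

Lemma walk_div (w : seq (E * bool)) a b : walk src dst a b w ->
  forall v, \sum_f incidence src dst R f v * walk_flow R w f
     = (v == a)%:R - (v == b)%:R.
Proof.
elim: w a => [|[e d] w IH] a /=.
  move=> /eqP -> v; rewrite subrr; apply: big1 => f _.
  by rewrite /walk_flow big_nil mulr0.
move=> /andP [/eqP ha hw] v.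
have -> : \sum_f incidence src dst R f v * walk_flow R ((e, d) :: w) f =
   \sum_f incidence src dst R f v * ((if d then 1 else -1) * (e == f)%:R)
 + \sum_f incidence src dst R f v * walk_flow R w f.
  rewrite -big_split; apply: eq_bigr => f _.
  by rewrite /walk_flow big_cons /= mulrDr.
have -> : \sum_f incidence src dst R f v * ((if d then 1 else -1) * (e == f)%:R)
   = (if d then 1 else -1) * incidence src dst R e v.
  rewrite -(sum_delta (fun f => (if d then 1 else -1) * incidence src dst R f v)).
  by apply: eq_bigr => f _; rewrite mulrA [_ * (if _ then _ else _)]mulrC.
rewrite (IH _ hw) -ha /stail /shead /incidence.
by case: d ha hw => /= _ _; ring.
Qed.

Lemma tree_circ (T : {set E}) (h : E -> R) :
  (forall e, e \in T -> ~~ connect (adj src dst (T :\ e)) (src e) (dst e)) ->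
  circulation src dst h -> (forall f, f \notin T -> h f = 0) ->
  forall f, h f = 0.
Proof.
move=> hT hc hs f.
case: (boolP (f \in T)) => fT; last exact: hs.
set C := [set v | connect (adj src dst (T :\ f)) (src f) v].
have : \sum_(v in C) \sum_k incidence src dst R k v * h k = 0.
  by apply: big1 => v _; apply: hc.
rewrite exchange_big /=.
have ind : forall x, \sum_(v in C) (v == x)%:R = (x \in C)%:R :> R.
  move=> x; rewrite big_mkcond (bigD1 x) //= eqxx big1 ?addr0.
    by case: (x \in C).
  by move=> v /negbTE ->; case: (v \in C).
under eq_bigr => k _ do rewrite -mulr_suml.
rewrite (bigD1 f) //= [X in _ + X = _]big1 ?addr0.
  rewrite /incidence sumrB !ind.
  have -> : src f \in C by rewrite inE connect0.
  have -> : dst f \in C = false by rewrite inE; apply/negbTE/hT.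
  by rewrite subr0 mul1r.
move=> k kf.
case: (boolP (k \in T)) => kT; last by rewrite hs // mulr0.
have kTf : k \in T :\ f by rewrite !inE kf.
have a1 : adj src dst (T :\ f) (src k) (dst k).
  by apply/existsP; exists k; rewrite kTf !eqxx.
have a2 : adj src dst (T :\ f) (dst k) (src k).
  by apply/existsP; exists k; rewrite kTf !eqxx orbT.
rewrite /incidence sumrB !ind.
have -> : (dst k \in C) = (src k \in C).
  rewrite !inE; apply/idP/idP => H.
    by apply: connect_trans H (connect1 a2).
  by apply: connect_trans H (connect1 a1).
by rewrite subrr mul0r.
Qed.
End Help.

Theorem lemma9p1 (R : rcfType) (V E : finType) (src dst : E -> V)
  (r : E -> R) (T : {set E}) (pi : V -> V -> E -> R)
  (hloop : forall e, src e != dst e)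
  (hconn : connected_sub src dst [set: E])
  (hr : forall e, 0 < r e)
  (hT : spanning_tree src dst T)
  (hpi : forall a b, tree_path_flow src dst T a b (pi a b))
  (hnonempty : exists e, e \notin T)
  (g : E -> R) (hg : circulation src dst g) :
  \sum_(e | e \notin T)
      prob src dst r pi T e * (dotR r g (chat src dst r pi e)) ^+ 2
    >= dotR r g g / tau src dst r pi T.
Proof.
set c := cvec src dst pi.
have supp : forall a b f, f \notin T -> pi a b f = 0.
  move=> a b f fT; have [w [/and3P [_ hall _] ->]] := hpi a b.
  rewrite /walk_flow big_seq big1 // => s sw.
  have sT : s.1 \in T by move/allP: hall; apply.
  have ne : s.1 != f by apply: contraNneq fT => <-.
  by rewrite (negbTE ne) mulr0.
have cdiv : forall e v, \sum_f incidence src dst R f v * c e f = 0.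
  move=> e v; rewrite /c /cvec.
  under eq_bigr => f _ do rewrite mulrBr.
  rewrite sumrB.
  have [w [/and3P [hw _ _] ->]] := hpi (src e) (dst e).
  rewrite (@walk_div R V E src dst _ _ _ hw).
  under eq_bigr => f _ do rewrite eq_sym.
  by rewrite sum_delta /incidence subrr.
have cT : forall e f, e \notin T -> f \notin T -> c e f = (f == e)%:R.
  by move=> e f _ fT; rewrite /c /cvec supp // subr0.
have decomp : forall f, g f = \sum_(e | e \notin T) g e * c e f.
  move=> f; apply/eqP; rewrite -subr_eq0; apply/eqP.
  apply: (@tree_circ R V E src dst T (fun f => g f - \sum_(e | e \notin T) g e * c e f)
            hT.2) => [v | k kT] /=.
    under eq_bigr => k _ do rewrite mulrBr mulr_sumr.
    rewrite sumrB hg sub0r exchange_big /=.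
    rewrite big1 ?oppr0 // => e _.
    under eq_bigr => k _ do rewrite mulrCA.
    by rewrite -mulr_sumr cdiv mulr0.
  rewrite (bigD1 k) //= [X in _ * _ + X]big1 ?addr0.
    by rewrite cT // eqxx mulr1 subrr.
  by move=> e /andP [eT ek]; rewrite cT // eq_sym (negbTE ek) mulr0.
set x := fun e => dotR r g (c e).
have hQ : dotR r g g = \sum_(e | e \notin T) g e * x e.
  rewrite {1}/dotR.
  under eq_bigr => f _ do rewrite {2}(decomp f) mulr_sumr.
  rewrite exchange_big /=; apply: eq_bigr => e _.
  rewrite /x /dotR mulr_sumr; apply: eq_bigr => f _; ring.
have Rpos : forall e, e \notin T -> 0 < Reff src dst r pi e.
  move=> e eT; rewrite /Reff /dotR (bigD1 e) //=.
  have h1 : 0 < cvec src dst pi e e * r e * cvec src dst pi e e.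
    by have := cT e e eT eT; rewrite /c => ->; rewrite eqxx mul1r mulr1.
  have h2 : 0 <= \sum_(f | f != e) cvec src dst pi e f * r f * cvec src dst pi e f.
    apply: sumr_ge0 => f _; rewrite mulrAC -expr2.
    by apply: mulr_ge0; [exact: sqr_ge0 | exact: ltW].
  lra.
have taupos : 0 < tau src dst r pi T.
  have [e0 e0T] := hnonempty.
  rewrite /tau (bigD1 e0) //=.
  have h1 : 0 < Reff src dst r pi e0 / r e0 by apply: divr_gt0; [exact: Rpos | exact: hr].
  have h2 : 0 <= \sum_(e | (e \notin T) && (e != e0)) Reff src dst r pi e / r e.
    apply: sumr_ge0 => e /andP [eT _]; apply: divr_ge0; apply: ltW => //.
    exact: Rpos.
  lra.
have term : forall e, e \notin T ->
   prob src dst r pi T e * (dotR r g (chat src dst r pi e)) ^+ 2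
   = x e ^+ 2 / r e / tau src dst r pi T.
  move=> e eT.
  have -> : dotR r g (chat src dst r pi e)
      = x e / Num.sqrt (Reff src dst r pi e).
    rewrite /x /dotR /chat mulr_suml; apply: eq_bigr => f _.
    by rewrite mulrA.
  rewrite expr_div_n sqr_sqrtr; last exact: ltW (Rpos e eT).
  rewrite /prob.
  have := Rpos e eT; have := hr e.
  move=> hre hRe; field.
  by rewrite (gt_eqF taupos) (gt_eqF hRe) (gt_eqF hre).
rewrite (eq_bigr (fun e => x e ^+ 2 / r e / tau src dst r pi T)); last first.
  by move=> e eT; apply: term.
rewrite -mulr_suml ler_pM2r ?invr_gt0 //.
have h0 : 0 <= \sum_(e | e \notin T) (r e * g e - x e) ^+ 2 / r e.
  by apply: sumr_ge0 => e _; apply: divr_ge0; [exact: sqr_ge0 | exact: ltW].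
have hexp : \sum_(e | e \notin T) (r e * g e - x e) ^+ 2 / r e
   = \sum_(e | e \notin T) r e * g e ^+ 2 - 2 * \sum_(e | e \notin T) g e * x e
     + \sum_(e | e \notin T) x e ^+ 2 / r e.
  rewrite mulr_sumr -sumrB -big_split /=; apply: eq_bigr => e _.
  have := hr e => hre; field; by rewrite (gt_eqF hre).
have hle : \sum_(e | e \notin T) r e * g e ^+ 2 <= dotR r g g.
  rewrite /dotR big_mkcond /=; apply: ler_sum => e _.
  case: ifP => _.
    by rewrite le_eqVlt; apply/orP; left; apply/eqP; ring.
  by rewrite mulrAC -expr2; apply: mulr_ge0; [exact: sqr_ge0 | exact: ltW].
lra.
Qed.
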